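(* Let $\mathfrak{B}=\bigcup_{\alpha<\xi}B_\alpha$ be a tightly $\sigma$-filtered Boolean algebra with its fixed chain $(B_\alpha)_{\alpha<\xi}$ and countable subalgebras $R_\alpha,S_\alpha$. Let $\Gamma_1,\Gamma_2\subseteq\xi$ be such that $\Gamma_1$, $\Gamma_2$ and $\Gamma_1\cap\Gamma_2$ are all saturated. Then the inclusions $E(\Gamma_1\cap\Gamma_2)\subseteq E(\Gamma_1)\subseteq E(\Gamma_1\cup\Gamma_2)$, $E(\Gamma_1\cap\Gamma_2)\subseteq E(\Gamma_2)\subseteq E(\Gamma_1\cup\Gamma_2)$ form a push-out diagram; that is, $\langle E(\Gamma_1)\cup E(\Gamma_2)\rangle=E(\Gamma_1\cup\Gamma_2)$, $E(\Gamma_1)\cap E(\Gamma_2)=E(\Gamma_1\cap\Gamma_2)$, and $E(\Gamma_1)$ and $E(\Gamma_2)$ commute.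
   Context: For a subset $X$ of a Boolean algebra, $\langle X\rangle$ is the subalgebra generated by $X$. Two subalgebras $A,S$ commute if whenever $a\in A$, $s\in S$, $a\wedge s=0$, there exist $b_1,b_2\in A\cap S$ with $a\le b_1$, $s\le b_2$, $b_1\wedge b_2=0$. A square of inclusions $R\subseteq A\subseteq B$, $R\subseteq S\subseteq B$ is a push-out diagram if $\langle A\cup S\rangle=B$, $A\cap S=R$, and $A,S$ commute. $\mathfrak{B}$ is tightly $\sigma$-filtered via an increasing chain of subalgebras $(B_\alpha)_{\alpha<\xi}$ ($\xi$ an ordinal) with $B_0=\{0,1\}$, $\mathfrak{B}=\bigcup_{\alpha<\xi}B_\alpha$, $B_\alpha=\bigcup_{\beta<\alpha}B_\beta$ for limit $\alpha$, and for each $\alpha<\xi$ countable subalgebras $R_\alpha,S_\alpha\subseteq\mathfrak{B}$ such that $R_\alpha\subseteq B_\alpha\subseteq B_{\alpha+1}$, $R_\alpha\subseteq S_\alpha\subseteq B_{\alpha+1}$ is a push-out diagram. For $\Gamma\subseteq\xi$, $E(\Gamma)=\langle\bigcup_{i\in\Gamma}S_i\rangle$. A set $\Gamma\subseteq\xi$ is saturated if $R_\gamma\subseteq E(\Gamma\cap\gamma)$ for every $\gamma\in\Gamma$. *)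

(* Defs.v *)
From HB Require Import structures.
From mathcomp Require Import all_boot all_order.
From mathcomp Require Import boolp classical_sets cardinality.
Set Implicit Arguments. Unset Strict Implicit. Unset Printing Implicit Defensive.
Import Order.TTheory.

(* Boolean algebras are MathComp's complemented distributive lattices with
   top and bottom (ctbDistrLatticeType).  Subsets are [set T] = T -> Prop. *)

Section BA.
Context {d : Order.disp_t} {T : ctbDistrLatticeType d}.
Local Open Scope order_scope.

Definition is_subalg (A : set T) : Prop :=
  [/\ A \bot, A \top,
      (forall x y, A x -> A y -> A (Order.meet x y)),
      (forall x y, A x -> A y -> A (Order.join x y)) &
      (forall x, A x -> A (Order.compl x))].

Definition gen (X : set T) : set T :=
  fun x => forall A : set T, is_subalg A -> (forall y, X y -> A y) -> A x.

Definition commute_subalg (A S : set T) : Prop :=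
  forall a s, A a -> S s -> Order.meet a s = \bot ->
    exists b1 b2, (A b1 /\ S b1) /\ (A b2 /\ S b2) /\ a <= b1 /\ s <= b2 /\
                  Order.meet b1 b2 = \bot.

Definition pushout (R A S B : set T) : Prop :=
  (forall x, R x -> A x) /\ (forall x, A x -> B x) /\
  (forall x, R x -> S x) /\ (forall x, S x -> B x) /\
  gen (fun x => A x \/ S x) = B /\
  (fun x => A x /\ S x) = R /\
  commute_subalg A S.
End BA.

Section Ord.
Context {dI : Order.disp_t} {I : orderType dI}.
Local Open Scope order_scope.
Definition is_succ (a b : I) : Prop := a < b /\ forall c, a < c -> b <= c.
Definition is_limit (a : I) : Prop :=
  (exists b, b < a) /\ ~ (exists b, is_succ b a).
End Ord.

Section Filt.
Context {d : Order.disp_t} {T : ctbDistrLatticeType d}.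
Context {dI : Order.disp_t} {I : orderType dI}.
Local Open Scope order_scope.

(* B_{a+1}; when a is the last element of the index ordinal xi
   (i.e. a+1 = xi) this is the whole algebra. *)
Definition Bnext (B : I -> set T) (a : I) : set T :=
  fun x => (forall c, ~ (a < c)) \/ (exists b, is_succ a b /\ B b x).

(* The ordinal xi is represented by the well-ordered type I (its elements
   are the ordinals alpha < xi).  The Boolean algebra is the whole type T. *)
Definition tightly_sigma_filtered (B R S : I -> set T) : Prop :=
  well_founded (fun a b : I => a < b) /\
  (forall a, is_subalg (B a)) /\
  (forall a b, a <= b -> forall x, B a x -> B b x) /\
  (forall i0 : I, (forall j, i0 <= j) -> B i0 = (fun x => x = \bot \/ x = \top)) /\
  (forall x, exists a, B a x) /\
  (forall a, is_limit a -> B a = (fun x => exists b, b < a /\ B b x)) /\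
  (forall a, [/\ is_subalg (R a), is_subalg (S a), countable (R a),
                 countable (S a) & pushout (R a) (B a) (S a) (Bnext B a)]).

Definition E (S : I -> set T) (G : set I) : set T :=
  gen (fun x => exists i, G i /\ S i x).

Definition saturated (R S : I -> set T) (G : set I) : Prop :=
  forall g, G g -> forall x, R g x -> E S (fun i => G i /\ i < g) x.
End Filt.

(* Main.v *)
Require Import Defs.
From HB Require Import structures.
From mathcomp Require Import all_boot all_order.
From mathcomp Require Import boolp classical_sets cardinality.
Set Implicit Arguments. Unset Strict Implicit. Unset Printing Implicit Defensive.
Import Order.Theory.
Local Open Scope order_scope.

Section Gen.
Context {d : Order.disp_t} {T : ctbDistrLatticeType d}.
Implicit Types (x y v a b s t : T) (X Y Z W A N Sa Ba Ra J Ja Jb Jc Jd : T -> Prop).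

Lemma gen_sub X : is_subalg (gen X).
Proof.
split.
- by move=> A [h0 _ _ _ _].
- by move=> A [_ h1 _ _ _].
- move=> x y hx hy A HA hX; have [_ _ hI _ _] := HA; exact: hI (hx A HA hX) (hy A HA hX).
- move=> x y hx hy A HA hX; have [_ _ _ hU _] := HA; exact: hU (hx A HA hX) (hy A HA hX).
- move=> x hx A HA hX; have [_ _ _ _ hC] := HA; exact: hC (hx A HA hX).
Qed.

Lemma gen_incl X x : X x -> gen X x.
Proof. by move=> hx A _ hX; apply: (hX). Qed.

Lemma gen_min X A : is_subalg A -> (forall y, X y -> A y) -> forall x, gen X x -> A x.
Proof. by move=> HA hX x hx; apply: (hx). Qed.

Lemma le0 x : x <= \bot -> x = \bot.
Proof. by rewrite lex0 => /eqP. Qed.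

Lemma leC0 a r : a <= r -> a `&` ~` r = \bot.
Proof. by move=> h; apply/eqP; rewrite disj_leC complK. Qed.

Lemma shunt a b c : (a `&` b <= c) <-> (a <= ~` b `|` c).
Proof.
split=> h.
- have -> : a = (a `&` b) `|` (a `&` ~` b) by rewrite -meetUr joinxC meetx1.
  by rewrite leUx (le_trans h (leUr _ _)) (le_trans (leIr _ _) (leUl _ _)).
- apply: (@le_trans _ _ ((~` b `|` c) `&` b)); first exact: leI2.
  by rewrite meetUl meetCx join0x leIl.
Qed.

Lemma swapl a b c : a `&` ~` b <= c -> a `&` ~` c <= b.
Proof. by move/shunt; rewrite complK => h; apply/shunt; rewrite complK joinC. Qed.

Lemma eqL y x r q : y `&` ~` x <= r -> x `&` ~` y <= q ->
  y `&` (~` r `&` ~` q) = x `&` (~` r `&` ~` q).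
Proof.
move=> /swapl h1 /swapl h2; apply/le_anti/andP; split; rewrite lexI leIr andbT.
- by rewrite meetA (le_trans (leIl _ _) h1).
- by rewrite meetA meetAC (le_trans (leIl _ _) h2).
Qed.

Lemma kill a b s : a `&` s = b `&` s -> (a `&` ~` b) `&` s = \bot.
Proof. by move=> h; rewrite meetAC h meetAC meetxC meet0x. Qed.

Lemma complmeet v x s : v `&` s = x `&` s -> ~` v `&` s = ~` x `&` s.
Proof.
have H u : ~` u `&` s = s `&` ~` (u `&` s).
  by rewrite complI meetUr meetxC joinx0 meetC.
by move=> h; rewrite H h -H.
Qed.

Definition is_ideal (N : T -> Prop) :=
  [/\ N \bot, (forall x y, y <= x -> N x -> N y) & (forall x y, N x -> N y -> N (x `|` y))].
Definition idl J t := forall N, is_ideal N -> (forall y, J y -> N y) -> N t.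

Lemma idl_ideal J : is_ideal (idl J).
Proof.
split.
- by move=> N [] .
- by move=> x y hxy hx N HN hJ; case: (HN) => _ hd _; apply: (hd) hxy (hx N HN hJ).
- by move=> x y hx hy N HN hJ; case: (HN) => _ _ hu; apply: (hu) (hx N HN hJ) (hy N HN hJ).
Qed.

Lemma idl_incl J y : J y -> idl J y.
Proof. by move=> hy N _ hJ; apply: (hJ). Qed.

Lemma idl_mono J Jd t : (forall y, J y -> Jd y) -> idl J t -> idl Jd t.
Proof. by move=> hJ ht N HN hJ'; apply: ht => // y /hJ /hJ'. Qed.

Lemma prod_cover Ja Jb Jc : idl Ja \top -> idl Jb \top ->
  (forall s1 s2, Ja s1 -> Jb s2 -> Jc (s1 `&` s2)) -> idl Jc \top.
Proof.
move=> h1 h2 h12.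
have [M0 Md Mu] := idl_ideal Jc.
apply: h2; first exact: idl_ideal.
move=> s2 hs2.
have : (fun t => idl Jc (t `&` s2)) \top.
  apply: (h1 (fun t => idl Jc (t `&` s2))).
  - split.
    + by rewrite meet0x.
    + by move=> x y hxy; apply: (Md); apply: leI2.
    + by move=> x y hx hy; rewrite meetUl; apply: (Mu).
  - by move=> y hy; apply: idl_incl; apply: h12.
by rewrite /= meet1x.
Qed.

Definition Jp X Sa v s := Sa s /\ exists x, X x /\ v `&` s = x `&` s.

Lemma cov_gen X Sa : is_subalg X -> is_subalg Sa -> forall v,
  gen (fun x => X x \/ Sa x) v -> idl (Jp X Sa v) \top.
Proof.
move=> [X0 X1 XI XU XC] [S00 S01 SI SU SC].
have gX x : X x -> idl (Jp X Sa x) \top.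
  by move=> hx; apply: idl_incl; split => //; exists x.
apply: gen_min; last first.
  move=> y [/gX //| hy].
  have [I0 Id Iu] := idl_ideal (Jp X Sa y).
  rewrite -(joinxC y); apply: (Iu); apply: idl_incl; split => //.
  - by exists \top; split => //; rewrite meetxx meet1x.
  - exact: (SC).
  - by exists \bot; split => //; rewrite meetxC meet0x.
split.
- exact: gX.
- exact: gX.
- move=> v w hv hw; apply: (prod_cover hv hw) => s1 s2 [hs1 [x [hx e1]]] [hs2 [y [hy e2]]].
  split; first exact: (SI).
  exists (x `&` y); split; first exact: (XI).
  by rewrite meetACA e1 e2 meetACA.
- move=> v w hv hw; apply: (prod_cover hv hw) => s1 s2 [hs1 [x [hx e1]]] [hs2 [y [hy e2]]].
  split; first exact: (SI).
  exists (x `|` y); split; first exact: (XU).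
  rewrite !meetUl meetA e1 -meetA; congr (_ `|` _).
  by rewrite (meetC s1) meetA e2 -meetA.
- move=> v hv; apply: idl_mono hv => s [hs [x [hx e]]].
  split => //; exists (~` x); split; first exact: (XC).
  exact: complmeet.
Qed.

Lemma cover_gen X Sa W v : is_subalg Sa -> is_subalg W ->
  (forall x, X x -> W x) -> (forall x, Sa x -> W x) ->
  idl (Jp X Sa v) \top -> W v.
Proof.
move=> [S00 S01 SI SU SC] [W0 W1 WI WU WC] hXW hSW hv.
have : (fun t => exists u, Sa u /\ t <= u /\ W (v `&` u)) \top.
  apply: (hv (fun t => exists u, Sa u /\ t <= u /\ W (v `&` u))).
  - split.
    + by exists \bot; split => //; split => //; rewrite meetx0.
    + by move=> x y hxy [u [hu [hxu hw]]]; exists u; split => //; split => //; apply: le_trans hxu.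
    + move=> x y [u [hu [hxu hw]]] [u' [hu' [hxu' hw']]]; exists (u `|` u'); split; first exact: (SU).
      split; first exact: leU2.
      by rewrite meetUr; apply: (WU).
  - move=> s [hs [x [hx e]]]; exists s; split => //; split => //.
    by rewrite e; apply: (WI); [apply: (hXW) | apply: (hSW)].
move=> [u [_ [hu hw]]].
by move: hu; rewrite le1x => /eqP hu; rewrite hu meetx1 in hw.
Qed.

Definition Sep Ba Sa Ra := forall b s, Ba b -> Sa s -> b `&` s = \bot ->
  exists r, Ra r /\ b <= r /\ s <= ~` r.

Definition ComZ X Y Z := forall a s, X a -> Y s -> a `&` s = \bot ->
  exists b1 b2, Z b1 /\ Z b2 /\ a <= b1 /\ s <= b2 /\ b1 `&` b2 = \bot.

Lemma absorb X Ba Sa Ra y : is_subalg X -> is_subalg Ba -> (forall x, X x -> Ba x) ->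
  Sep Ba Sa Ra -> (forall r, Ra r -> X r) -> Ba y -> idl (Jp X Sa y) \top -> X y.
Proof.
move=> [X0 X1 XI XU XC] [B00 B01 BI BU BC] hXB hsep hRX hy hc.
have : (fun t => exists p, X p /\ t <= p /\ X (y `&` p)) \top.
  apply: (hc (fun t => exists p, X p /\ t <= p /\ X (y `&` p))).
  - split.
    + by exists \bot; split => //; split => //; rewrite meetx0.
    + by move=> x z hxz [p [hp [hxp hw]]]; exists p; split => //; split => //; apply: le_trans hxp.
    + move=> x z [p [hp [hxp hw]]] [p' [hp' [hxp' hw']]]; exists (p `|` p'); split; first exact: (XU).
      split; first exact: leU2.
      by rewrite meetUr; apply: (XU).
  - move=> s [hs [x [hx e]]].
    have [r [hr [h1 h2]]] := hsep _ _ (BI _ _ hy (BC _ (hXB _ hx))) hs (kill e).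
    have [q [hq [h3 h4]]] := hsep _ _ (BI _ _ (hXB _ hx) (BC _ hy)) hs (kill (esym e)).
    exists (~` r `&` ~` q); split; first by apply: (XI); apply: (XC); apply: (hRX).
    split; first by rewrite lexI h2 h4.
    by rewrite (eqL h1 h3); apply: (XI) => //; apply: (XI); apply: (XC); apply: (hRX).
move=> [p [_ [hp hw]]].
by move: hp; rewrite le1x => /eqP hp; rewrite hp meetx1 in hw.
Qed.

Lemma hull X Ba Sa Ra v y : is_subalg X -> is_subalg Ba -> (forall x, X x -> Ba x) ->
  Sep Ba Sa Ra -> (forall r, Ra r -> X r) -> Ba y -> idl (Jp X Sa v) \top ->
  v `&` y = \bot -> exists c, X c /\ v <= c /\ c `&` y = \bot.
Proof.
move=> [X0 X1 XI XU XC] [B00 B01 BI BU BC] hXB hsep hRX hy hc hvy.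
have : (fun t => exists c, X c /\ v `&` t <= c /\ c `&` y = \bot) \top.
  apply: (hc (fun t => exists c, X c /\ v `&` t <= c /\ c `&` y = \bot)).
  - split.
    + by exists \bot; split => //; split; [rewrite meetx0 | rewrite meet0x].
    + move=> x z hxz [c [hc1 [hc2 hc3]]]; exists c; split => //; split => //.
      by apply: le_trans hc2; apply: leI2.
    + move=> x z [c [hc1 [hc2 hc3]]] [c' [hc1' [hc2' hc3']]]; exists (c `|` c'); split; first exact: (XU).
      split; first by rewrite meetUr; apply: leU2.
      by rewrite meetUl hc3 hc3' joinxx.
  - move=> s [hs [x [hx e]]].
    have e2 : (x `&` y) `&` s = \bot by rewrite meetAC -e meetAC hvy meet0x.
    have [r [hr [h1 h2]]] := hsep _ _ (BI _ _ (hXB _ hx) hy) hs e2.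
    exists (x `&` ~` r); split; first by apply: (XI) => //; apply: (XC); apply: (hRX).
    split; first by rewrite e; apply: leI2.
    by rewrite meetAC leC0.
move=> [c [hc1 [hc2 hc3]]]; exists c; split => //; split => //.
by rewrite meetx1 in hc2.
Qed.
End Gen.
Section Gen2.
Context {d : Order.disp_t} {T : ctbDistrLatticeType d}.
Implicit Types (x y v a b s t : T) (X Y Z W A N Sa Ba Ra J Ja Jb Jc Jd : T -> Prop).

Lemma inter_cov X Y Z Ba Sa Ra v : is_subalg X -> is_subalg Y -> is_subalg Ba -> is_subalg Sa ->
  (forall x, X x -> Ba x) -> (forall x, Y x -> Ba x) ->
  Sep Ba Sa Ra -> (forall r, Ra r -> X r) -> (forall r, Ra r -> Y r) ->
  (forall w, X w -> Y w -> Z w) ->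
  idl (Jp X Sa v) \top -> idl (Jp Y Sa v) \top -> idl (Jp Z Sa v) \top.
Proof.
move=> [X0 X1 XI XU XC] [Y0 Y1 YI YU YC] [B00 B01 BI BU BC] [S00 S01 SI SU SC]
  hXB hYB hsep hRX hRY hXYZ hv1 hv2.
apply: (prod_cover hv1 hv2) => s1 s2 [hs1 [x [hx e1]]] [hs2 [y [hy e2]]].
have ex : v `&` (s1 `&` s2) = x `&` (s1 `&` s2) by rewrite !meetA e1.
have ey : v `&` (s1 `&` s2) = y `&` (s1 `&` s2) by rewrite (meetC s1) !meetA e2.
have e : y `&` (s1 `&` s2) = x `&` (s1 `&` s2) by rewrite -ex -ey.
have hst := SI _ _ hs1 hs2.
have [r [hr [h1 h2]]] := hsep _ _ (BI _ _ (hYB _ hy) (BC _ (hXB _ hx))) hst (kill e).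
have [q [hq [h3 h4]]] := hsep _ _ (BI _ _ (hXB _ hx) (BC _ (hYB _ hy))) hst (kill (esym e)).
have E := eqL h1 h3.
split => //; exists (x `&` (~` r `&` ~` q)); split.
  apply: (hXYZ).
    by apply: (XI) => //; apply: (XI); apply: (XC); apply: (hRX).
  by rewrite -E; apply: (YI) => //; apply: (YI); apply: (YC); apply: (hRY).
have hp : s1 `&` s2 <= ~` r `&` ~` q by rewrite lexI h2 h4.
by rewrite ex -meetA (meet_r hp).
Qed.

Lemma com_cov X Y Z W Ba Sa Ra a b : is_subalg X -> is_subalg Y -> is_subalg Ba -> is_subalg Sa ->
  is_subalg W ->
  (forall x, X x -> Ba x) -> (forall x, Y x -> Ba x) ->
  Sep Ba Sa Ra -> (forall r, Ra r -> X r) -> (forall r, Ra r -> Y r) ->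
  ComZ X Y Z -> (forall x, Z x -> W x) -> (forall x, Sa x -> W x) ->
  idl (Jp X Sa a) \top -> idl (Jp Y Sa b) \top -> a `&` b = \bot ->
  exists b1 b2, W b1 /\ W b2 /\ a <= b1 /\ b <= b2 /\ b1 `&` b2 = \bot.
Proof.
move=> [X0 X1 XI XU XC] [Y0 Y1 YI YU YC] [B00 B01 BI BU BC] [S00 S01 SI SU SC]
  [W0 W1 WI WU WC] hXB hYB hsep hRX hRY hcom hZW hSW ha hb hab.
pose Jc t := Sa t /\ exists x y, X x /\ Y y /\ a `&` t = x `&` t /\ b `&` t = y `&` t.
have hc : idl Jc \top.
  apply: (prod_cover ha hb) => s1 s2 [hs1 [x [hx e1]]] [hs2 [y [hy e2]]].
  split; first exact: (SI).
  exists x, y; split => //; split => //; split; first by rewrite !meetA e1.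
  by rewrite (meetC s1) !meetA e2.
pose N t := exists u, Sa u /\ t <= u /\ exists c1 c2, W c1 /\ W c2 /\ a `&` u <= c1 /\
   b `&` u <= c2 /\ c1 <= u /\ c2 <= u /\ c1 `&` c2 = \bot.
have : N \top.
  apply: (hc N).
  - split.
    + exists \bot; split => //; split => //; exists \bot, \bot.
      by rewrite !meetx0 ?meet0x ?meetxx; do 6 split => //.
    + move=> x y hxy [u [hu [hxu rest]]]; exists u; split => //; split => //.
      exact: le_trans hxu.
    + move=> x y [u1 [hu1 [hxu1 [c1 [c2 [hc1 [hc2 [ha1 [hb1 [hcu1 [hcu2 hcc]]]]]]]]]]]
                 [u2 [hu2 [hxu2 [d1 [d2 [hd1 [hd2 [ha2 [hb2 [hdu1 [hdu2 hdd]]]]]]]]]]].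
      exists (u1 `|` u2); split; first exact: (SU).
      split; first exact: leU2.
      have hW1 : W (~` u1) by apply: (WC); apply: (hSW).
      exists (c1 `|` (d1 `&` ~` u1)), (c2 `|` (d2 `&` ~` u1)).
      have split_u (e c f : T) : e `&` u1 <= c -> e `&` u2 <= f ->
          e `&` (u1 `|` u2) <= c `|` (f `&` ~` u1).
        move=> h1 h2; rewrite meetUr leUx (le_trans h1 (leUl _ _)) /=.
        have -> : e `&` u2 = (e `&` u2 `&` u1) `|` (e `&` u2 `&` ~` u1).
          by rewrite -meetUr joinxC meetx1.
        rewrite leUx; apply/andP; split.
          by apply: le_trans (leUl _ _); apply: le_trans h1; rewrite meetAC leIl.
        by apply: le_trans (leUr _ _); apply: leI2.
      split; first by apply: (WU) => //; apply: (WI).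
      split; first by apply: (WU) => //; apply: (WI).
      split; first exact: split_u.
      split; first exact: split_u.
      split; first by rewrite leUx (le_trans hcu1 (leUl _ _)) (le_trans (leIl _ _) (le_trans hdu1 (leUr _ _))).
      split; first by rewrite leUx (le_trans hcu2 (leUl _ _)) (le_trans (leIl _ _) (le_trans hdu2 (leUr _ _))).
      apply: le0; rewrite meetUl !meetUr !leUx hcc lexx /=.
      rewrite (le_trans (leI2 hcu1 (leIr (~` u1) d2))) ?meetxC //=.
      rewrite (le_trans (leI2 (leIr (~` u1) d1) hcu2)) ?meetCx //=.
      by rewrite meetACA hdd meet0x.
  - move=> t [ht [x [y [hx [hy [e1 e2]]]]]].
    have e3 : (x `&` y) `&` t = \bot.
      by rewrite -(meetxx t) meetACA -e1 -e2 meetACA hab meet0x.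
    have [r [hr [h1 h2]]] := hsep _ _ (BI _ _ (hXB _ hx) (hYB _ hy)) ht e3.
    have e4 : (x `&` ~` r) `&` (y `&` ~` r) = \bot by rewrite meetACA meetxx leC0.
    have [b1 [b2 [hb1 [hb2 [l1 [l2 l3]]]]]] := hcom _ _ (XI _ _ hx (XC _ (hRX _ hr)))
       (YI _ _ hy (YC _ (hRY _ hr))) e4.
    exists t; split => //; split => //; exists (b1 `&` t), (b2 `&` t).
    split; first by apply: (WI); [apply: (hZW) | apply: (hSW)].
    split; first by apply: (WI); [apply: (hZW) | apply: (hSW)].
    split; first by rewrite e1 lexI leIr andbT; apply: le_trans l1; apply: leI2.
    split; first by rewrite e2 lexI leIr andbT; apply: le_trans l2; apply: leI2.
    split; first exact: leIr.
    split; first exact: leIr.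
    by rewrite meetACA l3 meet0x.
move=> [u [_ [hu [c1 [c2 [hc1 [hc2 [h1 [h2 [_ [_ h3]]]]]]]]]]].
move: hu; rewrite le1x => /eqP hu; rewrite hu !meetx1 in h1 h2.
by exists c1, c2.
Qed.
End Gen2.
Set Strict Implicit.
Section Main.
Context {d : Order.disp_t} {T : ctbDistrLatticeType d}.
Context {dI : Order.disp_t} {I : orderType dI}.
Variables (B R S : I -> T -> Prop) (G1 G2 : I -> Prop).
Hypothesis HT : tightly_sigma_filtered B R S.
Hypothesis sat1 : saturated R S G1.
Hypothesis sat2 : saturated R S G2.
Hypothesis sat12 : saturated R S (fun i => G1 i /\ G2 i).

Lemma E_mono (G G' : I -> Prop) x : (forall i, G i -> G' i) -> E S G x -> E S G' x.
Proof.
move=> hG; apply: gen_min; first exact: gen_sub.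
by move=> y [i [hi hy]]; apply: gen_incl; exists i; split => //; apply: hG.
Qed.

Lemma E0_sub (G : I -> Prop) x : E S (fun _ => False) x -> E S G x.
Proof. by apply: E_mono. Qed.

Lemma E_sub G : is_subalg (E S G).
Proof. exact: gen_sub. Qed.

Lemma Hall a : [/\ is_subalg (R a), is_subalg (S a), countable (R a),
                 countable (S a) & pushout (R a) (B a) (S a) (Bnext B a)].
Proof. by case: HT => [_ [_ [_ [_ [_ [_ h]]]]]]. Qed.

Lemma Bsub a : is_subalg (B a).
Proof. by case: HT => [_ [h _]]. Qed.

Lemma Bmono a b : a <= b -> forall x, B a x -> B b x.
Proof. by case: HT => [_ [_ [h _]]]; apply: h. Qed.

Lemma XB (G : I -> Prop) al x : E S (fun i => G i /\ i < al) x -> B al x.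
Proof.
apply: gen_min; first exact: Bsub.
move=> y [i [[_ hi] hy]].
have [_ _ _ _ [_ [_ [_ [hSB _]]]]] := Hall i.
case: (hSB _ hy) => [hmax | [b [[hib hb] hBb]]].
  by case: (hmax al).
exact: Bmono (hb _ hi) _ hBb.
Qed.

Lemma sep a : Sep (B a) (S a) (R a).
Proof.
have [_ _ _ _ [_ [_ [_ [_ [_ [Heq Hcom]]]]]]] := Hall a.
move=> b s hb hs e.
have [b1 [b2 [[hb1 hs1] [[hb2 hs2] [l1 [l2 l3]]]]]] := Hcom _ _ hb hs e.
exists b1; split.
  by rewrite -Heq.
split => //; apply: le_trans l2 _.
by rewrite -disj_leC meetC l3.
Qed.

Definition EP (G P : I -> Prop) := E S (fun i => G i /\ P i).
Definition G12 i := G1 i /\ G2 i.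
Definition Phi (P : I -> Prop) :=
  (forall v, EP G1 P v -> EP G2 P v -> EP G12 P v) /\
  ComZ (EP G1 P) (EP G2 P) (EP G12 P).

Definition Dset (G P : I -> Prop) v :=
  E S (fun _ => False) v \/ exists be, P be /\ EP G (fun i => i <= be) v.

Lemma Dop (G P : I -> Prop) (op : T -> T -> T) :
  (forall G' v w, E S G' v -> E S G' w -> E S G' (op v w)) ->
  forall v w, Dset G P v -> Dset G P w -> Dset G P (op v w).
Proof.
move=> hop v w [hv | [b1 [hb1 hv]]] [hw | [b2 [hb2 hw]]].
- by left; apply: hop.
- by right; exists b2; split => //; apply: hop => //; apply: E0_sub.
- by right; exists b1; split => //; apply: hop => //; apply: E0_sub.
- case: (leP b1 b2) => hb.
  + right; exists b2; split => //; apply: hop => //.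
    by apply: E_mono hv => i [hi hib]; split => //; apply: le_trans hib hb.
  + right; exists b1; split => //; apply: hop => //.
    by apply: E_mono hw => i [hi hib]; split => //; apply: le_trans hib (ltW hb).
Qed.

Lemma E_split (G P : I -> Prop) v : EP G P v -> Dset G P v.
Proof.
apply: gen_min; last first.
  move=> y [i [[hG hP] hy]]; right; exists i; split => //.
  by apply: gen_incl; exists i.
split.
- by left; case: (E_sub (fun _ => False)).
- by left; case: (E_sub (fun _ => False)).
- by apply: Dop => G' v1 w1; case: (E_sub G') => _ _ hI _ _; apply: hI.
- by apply: Dop => G' v1 w1; case: (E_sub G') => _ _ _ hU _; apply: hU.
- move=> x [hx | [b [hb hx]]].
  + by left; case: (E_sub (fun _ => False)) => _ _ _ _ hC; apply: hC.
  + by right; exists b; split => //; case: (E_sub (fun i => G i /\ i <= b)) => _ _ _ _ hC; apply: hC.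
Qed.

Lemma common (P : I -> Prop) v w :
  Dset G1 P v -> Dset G2 P w ->
  (E S (fun _ => False) v /\ E S (fun _ => False) w) \/
  exists be, P be /\ EP G1 (fun i => i <= be) v /\ EP G2 (fun i => i <= be) w.
Proof.
move=> [hv | [b1 [hb1 hv]]] [hw | [b2 [hb2 hw]]].
- by left.
- by right; exists b2; split => //; split => //; apply: E0_sub.
- by right; exists b1; split => //; split => //; apply: E0_sub.
- right; case: (leP b1 b2) => hb.
  + exists b2; split => //; split => //.
    by apply: E_mono hv => i [hi hib]; split => //; apply: le_trans hib hb.
  + exists b1; split => //; split => //.
    by apply: E_mono hw => i [hi hib]; split => //; apply: le_trans hib (ltW hb).
Qed.

Lemma union (P : I -> Prop) : (forall be i, P be -> i <= be -> P i) ->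
  (forall be, P be -> Phi (fun i => i <= be)) -> Phi P.
Proof.
move=> Pdc IH.
have lift be x : P be -> EP G12 (fun i => i <= be) x -> EP G12 P x.
  by move=> hb; apply: E_mono => i [hi hib]; split => //; apply: Pdc hib.
split.
- move=> v hv1 hv2.
  case: (common (E_split hv1) (E_split hv2)) => [[h _] | [be [hb [h1 h2]]]].
    exact: E0_sub.
  by apply: (lift be) => //; apply: (proj1 (IH be hb)).
- move=> a s ha hs e.
  case: (common (E_split ha) (E_split hs)) => [[h1 h2] | [be [hb [h1 h2]]]].
    by exists a, s; split; [exact: E0_sub | split; [exact: E0_sub|]].
  have [b1 [b2 [hb1 [hb2 rest]]]] := (proj2 (IH be hb)) _ _ h1 h2 e.
  by exists b1, b2; split; [exact: (lift be) | split; [exact: (lift be)|]].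
Qed.

Lemma not_alpha (G : I -> Prop) al x : ~ G al ->
  EP G (fun i => i <= al) x -> EP G (fun i => i < al) x.
Proof.
move=> hn; apply: E_mono => i [hi]; rewrite le_eqVlt => /orP [/eqP e | h] //.
by rewrite e in hi.
Qed.
Arguments not_alpha {G al x}.

Lemma lt_le (G : I -> Prop) al x : EP G (fun i => i < al) x -> EP G (fun i => i <= al) x.
Proof. by apply: E_mono => i [hi h]; split => //; apply: ltW. Qed.

Lemma Xp_cov (G : I -> Prop) al x : EP G (fun i => i <= al) x ->
  idl (Jp (EP G (fun i => i < al)) (S al) x) \top.
Proof.
move=> hx; apply: cov_gen; first exact: E_sub.
  by case: (Hall al).
move: x hx; apply: gen_min; first exact: gen_sub.
move=> y [i [[hi]]]; rewrite le_eqVlt => /orP [/eqP e | h] hy.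
  by apply: gen_incl; right; rewrite -e.
by apply: gen_incl; left; apply: gen_incl; exists i.
Qed.

Lemma step al : Phi (fun i => i < al) -> Phi (fun i => i <= al).
Proof.
move=> [hint hcom].
set X := EP G1 (fun i => i < al).
set Y := EP G2 (fun i => i < al).
set Z := EP G12 (fun i => i < al).
have XBa : forall x, X x -> B al x by move=> x; apply: XB.
have YBa : forall x, Y x -> B al x by move=> x; apply: XB.
have Ssub : is_subalg (S al) by case: (Hall al).
have ZZp : forall x, Z x -> EP G12 (fun i => i <= al) x by move=> x; apply: lt_le.
case: (pselect (G1 al)) => g1; case: (pselect (G2 al)) => g2.
- have RX : forall r, R al r -> X r by move=> r; apply: sat1.
  have RY : forall r, R al r -> Y r by move=> r; apply: sat2.
  have SZp : forall x, S al x -> EP G12 (fun i => i <= al) x.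
    by move=> x hx; apply: gen_incl; exists al; split => //; split => //; split.
  split.
  + move=> v hv1 hv2; apply: (cover_gen (X := Z) Ssub (E_sub _) ZZp SZp).
    apply: (inter_cov (E_sub _) (E_sub _) (Bsub al) Ssub XBa YBa (@sep al) RX RY hint).
      exact: Xp_cov.
    exact: Xp_cov.
  + move=> a s ha hs e.
    exact: (com_cov (E_sub _) (E_sub _) (Bsub al) Ssub (E_sub _) XBa YBa (@sep al) RX RY hcom ZZp SZp
       (Xp_cov ha) (Xp_cov hs) e).
- have RX : forall r, R al r -> X r by move=> r; apply: sat1.
  split.
  + move=> v hv1 hv2; apply: ZZp; apply: hint; last exact: not_alpha hv2.
    apply: (absorb (E_sub _) (Bsub al) XBa (@sep al) RX); last exact: Xp_cov.
    by apply: YBa; apply: not_alpha hv2.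
  + move=> a s ha hs e.
    have hs' := not_alpha g2 hs.
    have [c [hc [hac hcs]]] := hull (E_sub _) (Bsub al) XBa (@sep al) RX (YBa _ hs') (Xp_cov ha) e.
    have [b1 [b2 [hb1 [hb2 [l1 [l2 l3]]]]]] := hcom _ _ hc hs' hcs.
    exists b1, b2; split; first exact: ZZp.
    split; first exact: ZZp.
    by split => //; apply: le_trans hac l1.
- have RY : forall r, R al r -> Y r by move=> r; apply: sat2.
  split.
  + move=> v hv1 hv2; apply: ZZp; apply: hint; first exact: not_alpha hv1.
    apply: (absorb (E_sub _) (Bsub al) YBa (@sep al) RY); last exact: Xp_cov.
    by apply: XBa; apply: not_alpha hv1.
  + move=> a s ha hs e.
    have ha' := not_alpha g1 ha.
    have e' : s `&` a = \bot by rewrite meetC.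
    have [c [hc [hsc hca]]] := hull (E_sub _) (Bsub al) YBa (@sep al) RY (XBa _ ha') (Xp_cov hs) e'.
    have hac : a `&` c = \bot by rewrite meetC.
    have [b1 [b2 [hb1 [hb2 [l1 [l2 l3]]]]]] := hcom _ _ ha' hc hac.
    exists b1, b2; split; first exact: ZZp.
    split; first exact: ZZp.
    by split => //; split => //; apply: le_trans hsc l2.
- split.
  + by move=> v hv1 hv2; apply: ZZp; apply: hint; apply: not_alpha.
  + move=> a s ha hs e.
    have [b1 [b2 [hb1 [hb2 rest]]]] := hcom _ _ (not_alpha g1 ha) (not_alpha g2 hs) e.
    by exists b1, b2; split; [exact: ZZp | split; [exact: ZZp|]].
Qed.

Lemma all_le al : Phi (fun i => i <= al).
Proof.
have wf : well_founded (fun a b : I => (a < b)%O) by case: HT.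
elim/(well_founded_ind wf): al => al IH.
apply: step; apply: union.
  by move=> be i hb hi; apply: le_lt_trans hi hb.
exact: IH.
Qed.

Lemma all_phi : Phi (fun _ => True).
Proof. by apply: union => // be _; apply: all_le. Qed.

End Main.

Theorem lemma3p2 (d : Order.disp_t) (T : ctbDistrLatticeType d)
  (dI : Order.disp_t) (I : orderType dI) (B R S : I -> set T)
  (G1 G2 : set I) :
  tightly_sigma_filtered B R S ->
  saturated R S G1 -> saturated R S G2 ->
  saturated R S (fun i => G1 i /\ G2 i) ->
  pushout (E S (fun i => G1 i /\ G2 i)) (E S G1) (E S G2)
          (E S (fun i => G1 i \/ G2 i)).
Proof.
move=> HT s1 s2 s12.
have [hint hcom] := all_phi HT s1 s2.
have toT (G : I -> Prop) x : E S G x -> EP S G (fun _ => True) x.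
  by apply: E_mono => i hi.
have fromT (G : I -> Prop) x : EP S G (fun _ => True) x -> E S G x.
  by apply: E_mono => i [hi _].
have m1 x : E S (fun i => G1 i /\ G2 i) x -> E S G1 x by apply: E_mono => i [].
have m2 x : E S (fun i => G1 i /\ G2 i) x -> E S G2 x by apply: E_mono => i [].
split; first exact: m1.
split; first by move=> x; apply: E_mono => i; left.
split; first exact: m2.
split; first by move=> x; apply: E_mono => i; right.
split.
  apply: funext => x; apply: propext; split.
    apply: gen_min; first exact: gen_sub.
    by move=> y [] ; apply: E_mono => i; [left | right].
  apply: gen_min; first exact: gen_sub.
  move=> y [i [[hi | hi] hy]]; apply: gen_incl; [left | right]; apply: gen_incl; by exists i.
split.
  apply: funext => x; apply: propext; split.
    by move=> [h1 h2]; apply: fromT; apply: hint; apply: toT.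
  by move=> h; split; [apply: m1 | apply: m2].
move=> a s ha hs e.
have [b1 [b2 [hb1 [hb2 rest]]]] := hcom _ _ (toT _ _ ha) (toT _ _ hs) e.
have hb1' := fromT _ _ hb1; have hb2' := fromT _ _ hb2.
by exists b1, b2; split; [split; [apply: m1 | apply: m2] | split; [split; [apply: m1 | apply: m2] |]].
Qed.
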